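(* Let $\alpha_0=\arctan \sqrt{q/p}$. The stationary points, in the region $R=R_1\cup R_2$ of the $(\vartheta,\alpha)$-plane, of the first order differential system \[ \dot{\vartheta}=3\,\sin \vartheta \, \cos \vartheta \, \sin (\alpha-\vartheta), \qquad \dot{\alpha}=q\,\cos \alpha \, \cos \vartheta \,-\, p\,\sin \alpha \, \sin \vartheta \] are exactly \[ P_0=(\alpha_0,\alpha_0),\quad P_1=(\alpha_0,\alpha_0+\pi),\quad Q_1=\left(0,\tfrac{\pi}{2}\right),\quad Q_2=\left(0,\tfrac{3\pi}{2}\right),\quad Q_3=\left(\tfrac{\pi}{2},0\right),\quad Q_4=\left(\tfrac{\pi}{2},\pi\right). \] Moreover, $P_0$ is a spiral sink if $p+q\leq 17$, while it is a nodal sink if $p+q\geq 18$; $P_1$ is a spiral source if $p+q\leq 17$, while it is a nodal source if $p+q\geq 18$; the points $Q_1,Q_2,Q_3,Q_4$ are saddle points.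
   Context: Here $p,q$ are positive integers (the dimensions of the spheres in $SO(p+1)\times SO(q+1)$-invariant hypersurfaces ${\mathbb S}^p\times{\mathbb S}^q\times(a,b)\to{\mathbb R}^{p+1}\times{\mathbb R}^{q+1}$, $(w,z,s)\mapsto(x(s)w,y(s)z)$, with profile curve $(x(s),y(s))$ parametrized by arc length, $\alpha$ the angle of the profile curve with the $x$-axis, and $\vartheta$ the polar angle, $x=r\cos\vartheta$, $y=r\sin\vartheta$). The system above is the one whose trajectories correspond to biconservative profile curves, i.e. solutions of $3\dot\alpha+p\frac{\sin\alpha}{x}-q\frac{\cos\alpha}{y}=0$. The regions are $R_1=\{(\vartheta,\alpha): 0\le\vartheta\le\pi/2,\ \vartheta-\pi/2\le\alpha\le\vartheta+\pi/2\}$ and $R_2=\{(\vartheta,\alpha): 0\le\vartheta\le\pi/2,\ \vartheta+\pi/2\le\alpha\le\vartheta+3\pi/2\}$. *)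

(* Defs.v *)
From Stdlib Require Import Reals ZArith.
From Coquelicot Require Import Coquelicot.
Open Scope R_scope.

Definition Fth (th al : R) : R := 3 * sin th * cos th * sin (al - th).
Definition Fal (p q : nat) (th al : R) : R :=
  INR q * cos al * cos th - INR p * sin al * sin th.

Definition stationary (p q : nat) (th al : R) : Prop :=
  Fth th al = 0 /\ Fal p q th al = 0.

Definition inR1 (th al : R) : Prop :=
  0 <= th <= PI / 2 /\ th - PI / 2 <= al <= th + PI / 2.
Definition inR2 (th al : R) : Prop :=
  0 <= th <= PI / 2 /\ th + PI / 2 <= al <= th + 3 * PI / 2.
Definition inR (th al : R) : Prop := inR1 th al \/ inR2 th al.

Definition jac_a (th al : R) : R := Derive (fun t => Fth t al) th.
Definition jac_b (th al : R) : R := Derive (fun a => Fth th a) al.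
Definition jac_c (p q : nat) (th al : R) : R := Derive (fun t => Fal p q t al) th.
Definition jac_d (p q : nat) (th al : R) : R := Derive (fun a => Fal p q th a) al.

Definition eigenvalue (a b c d : R) (z : C) : Prop :=
  ((RtoC a - z) * (RtoC d - z) - RtoC b * RtoC c)%C = RtoC 0.

Definition spiral_sink (a b c d : R) : Prop :=
  (exists z, eigenvalue a b c d z) /\
  forall z, eigenvalue a b c d z -> Im z <> 0 /\ Re z < 0.
Definition spiral_source (a b c d : R) : Prop :=
  (exists z, eigenvalue a b c d z) /\
  forall z, eigenvalue a b c d z -> Im z <> 0 /\ 0 < Re z.
Definition nodal_sink (a b c d : R) : Prop :=
  exists l1 l2 : R, l1 <> l2 /\ l1 < 0 /\ l2 < 0 /\
    forall z, eigenvalue a b c d z <-> (z = RtoC l1 \/ z = RtoC l2).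
Definition nodal_source (a b c d : R) : Prop :=
  exists l1 l2 : R, l1 <> l2 /\ 0 < l1 /\ 0 < l2 /\
    forall z, eigenvalue a b c d z <-> (z = RtoC l1 \/ z = RtoC l2).
Definition saddle (a b c d : R) : Prop :=
  exists l1 l2 : R, l1 < 0 /\ 0 < l2 /\
    forall z, eigenvalue a b c d z <-> (z = RtoC l1 \/ z = RtoC l2).

Definition lin (P : R -> R -> R -> R -> Prop) (p q : nat) (th al : R) : Prop :=
  P (jac_a th al) (jac_b th al) (jac_c p q th al) (jac_d p q th al).

Definition listed_point (a0 th al : R) : Prop :=
  (th = a0 /\ al = a0) \/ (th = a0 /\ al = a0 + PI) \/
  (th = 0 /\ al = PI / 2) \/ (th = 0 /\ al = 3 * PI / 2) \/
  (th = PI / 2 /\ al = 0) \/ (th = PI / 2 /\ al = PI).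

(* Main.v *)
Require Import Defs.
From Stdlib Require Import Reals ZArith Lra Lia Psatz.
From Coquelicot Require Import Coquelicot.
Open Scope R_scope.

Lemma eig_iff a b c d x y : eigenvalue a b c d (x,y) <->
  (x*x - y*y - (a+d)*x + (a*d - b*c) = 0 /\ y*(2*x - (a+d)) = 0).
Proof.
  unfold eigenvalue, RtoC, Cminus, Cmult, Cplus, Copp; simpl.
  split.
  - intro H; injection H; intros H1 H2; split; lra.
  - intros [H1 H2]; f_equal; lra.
Qed.

Lemma C_eq_R (x y l : R) : (x, y) = RtoC l <-> x = l /\ y = 0.
Proof. unfold RtoC; split; [intro H; injection H; auto | intros [-> ->]; auto]. Qed.

Lemma eig_complex a b c d :
  (a+d)*(a+d) - 4*(a*d-b*c) < 0 ->
  (exists z, eigenvalue a b c d z) /\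
  forall z, eigenvalue a b c d z -> Im z <> 0 /\ Re z = (a+d)/2.
Proof.
  intro Hd. split.
  - exists ((a+d)/2, sqrt (-((a+d)*(a+d) - 4*(a*d-b*c)))/2).
    apply eig_iff. pose proof (sqrt_sqrt (-((a+d)*(a+d) - 4*(a*d-b*c)))) as S.
    split; [|lra]. set (s := sqrt _) in *. assert (s*s = -((a+d)*(a+d) - 4*(a*d-b*c))) by (apply S; lra).
    nra.
  - intros [x y] H. apply eig_iff in H as [H1 H2]. simpl.
    destruct (Rmult_integral _ _ H2) as [Hy|Hx].
    + subst y. exfalso. simpl in *. assert (0 <= (2*x-(a+d))*(2*x-(a+d))) by (apply Rle_0_sqr). nra.
    + split; [|lra]. intro Hy; subst y. nra.
Qed.

Lemma eig_real a b c d :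
  0 < (a+d)*(a+d) - 4*(a*d-b*c) ->
  forall z, eigenvalue a b c d z <->
   (z = RtoC ((a+d - sqrt ((a+d)*(a+d) - 4*(a*d-b*c)))/2) \/
    z = RtoC ((a+d + sqrt ((a+d)*(a+d) - 4*(a*d-b*c)))/2)).
Proof.
  intros Hd [x y]. rewrite eig_iff, !C_eq_R.
  pose proof (sqrt_sqrt ((a+d)*(a+d) - 4*(a*d-b*c)) ltac:(lra)) as S.
  pose proof (sqrt_lt_R0 _ Hd) as S0.
  set (s := sqrt _) in *.
  split.
  - intros [H1 H2]. destruct (Rmult_integral _ _ H2) as [Hy|Hx].
    + subst y. assert ((x - (a+d - s)/2) * (x - (a+d+s)/2) = 0) by nra.
      destruct (Rmult_integral _ _ H) as [E|E]; [left|right]; split; lra.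
    + exfalso. assert (x = (a+d)/2) by lra. subst x. nra.
  - intros [[-> ->]|[-> ->]]; split; nra.
Qed.

Lemma eig_tri a c d z : eigenvalue a 0 c d z <-> (z = RtoC a \/ z = RtoC d).
Proof.
  destruct z as [x y]. rewrite eig_iff, !C_eq_R. split.
  - intros [H1 H2]. destruct (Rmult_integral _ _ H2) as [Hy|Hx].
    + subst y. assert ((x - a) * (x - d) = 0) by nra.
      destruct (Rmult_integral _ _ H) as [E|E]; [left|right]; split; lra.
    + assert (y*y + (a-d)*(a-d)/4 = 0) by nra.
      pose proof (Rle_0_sqr y). pose proof (Rle_0_sqr (a-d)). unfold Rsqr in *. assert (y*y = 0) by lra. assert (y = 0) by nra. left; split; nra.
  - intros [[-> ->]|[-> ->]]; split; nra.
Qed.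

Lemma saddle_tri a c d : (a < 0 /\ 0 < d) \/ (d < 0 /\ 0 < a) -> saddle a 0 c d.
Proof.
  intros [[Ha Hd]|[Hd Ha]]; [exists a, d | exists d, a]; repeat split; try lra;
  try intro z; rewrite eig_tri; tauto.
Qed.

Lemma ja th al : jac_a th al =
  3*(cos th*cos th - sin th*sin th)*sin(al-th) - 3*sin th*cos th*cos(al-th).
Proof. unfold jac_a, Fth. apply is_derive_unique. auto_derive; auto. unfold Rminus. ring. Qed.
Lemma jb th al : jac_b th al = 3*sin th*cos th*cos(al-th).
Proof. unfold jac_b, Fth. apply is_derive_unique. auto_derive; auto. unfold Rminus. ring. Qed.
Lemma jc p q th al : jac_c p q th al = - INR q * cos al * sin th - INR p * sin al * cos th.
Proof. unfold jac_c, Fal. apply is_derive_unique. auto_derive; auto. unfold Rminus. ring. Qed.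
Lemma jd p q th al : jac_d p q th al = - INR q * sin al * cos th - INR p * cos al * sin th.
Proof. unfold jac_d, Fal. apply is_derive_unique. auto_derive; auto. unfold Rminus. ring. Qed.

Lemma sin_per x k : sin (x + 2 * IZR k * PI) = sin x.
Proof.
  rewrite sin_plus. replace (2 * IZR k * PI) with (2 * (IZR k * PI)) by ring.
  rewrite cos_2a_sin, sin_2a, (sin_eq_0_1 (IZR k * PI)) by (exists k; ring). ring.
Qed.
Lemma cos_per x k : cos (x + 2 * IZR k * PI) = cos x.
Proof.
  rewrite cos_plus. replace (2 * IZR k * PI) with (2 * (IZR k * PI)) by ring.
  rewrite cos_2a_sin, sin_2a, (sin_eq_0_1 (IZR k * PI)) by (exists k; ring). ring.
Qed.
Lemma saddle_tri' a b c d : b = 0 -> (a < 0 /\ 0 < d) \/ (d < 0 /\ 0 < a) -> saddle a b c d.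
Proof. intros ->. apply saddle_tri. Qed.

Lemma ssink a b c d : a+d < 0 -> (a+d)*(a+d) - 4*(a*d-b*c) < 0 -> spiral_sink a b c d.
Proof.
  intros HT HD. destruct (eig_complex a b c d HD) as [E F]. split; auto.
  intros z Hz. destruct (F z Hz). split; lra.
Qed.
Lemma ssource a b c d : 0 < a+d -> (a+d)*(a+d) - 4*(a*d-b*c) < 0 -> spiral_source a b c d.
Proof.
  intros HT HD. destruct (eig_complex a b c d HD) as [E F]. split; auto.
  intros z Hz. destruct (F z Hz). split; lra.
Qed.
Lemma nsink a b c d : a+d < 0 -> 0 < a*d-b*c -> 0 < (a+d)*(a+d) - 4*(a*d-b*c) -> nodal_sink a b c d.
Proof.
  intros HT Hdet HD. pose proof (eig_real a b c d HD) as E.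
  pose proof (sqrt_sqrt ((a+d)*(a+d) - 4*(a*d-b*c)) ltac:(lra)) as S.
  pose proof (sqrt_lt_R0 _ HD) as S0.
  set (s := sqrt _) in *.
  exists ((a+d-s)/2), ((a+d+s)/2). repeat split; try lra.
  - nra.
  - apply E.
  - apply E.
Qed.
Lemma nsource a b c d : 0 < a+d -> 0 < a*d-b*c -> 0 < (a+d)*(a+d) - 4*(a*d-b*c) -> nodal_source a b c d.
Proof.
  intros HT Hdet HD. pose proof (eig_real a b c d HD) as E.
  pose proof (sqrt_sqrt ((a+d)*(a+d) - 4*(a*d-b*c)) ltac:(lra)) as S.
  pose proof (sqrt_lt_R0 _ HD) as S0.
  set (s := sqrt _) in *.
  exists ((a+d-s)/2), ((a+d+s)/2). repeat split; try lra.
  - nra.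
  - apply E.
  - apply E.
Qed.

Lemma a0_facts (p q : nat) (hp : (0 < p)%nat) (hq : (0 < q)%nat) :
  let a0 := atan (sqrt (INR q / INR p)) in
  0 < a0 < PI/2 /\ 0 < cos a0 /\ 0 < sin a0 /\
  INR q * cos a0 * cos a0 = INR p * sin a0 * sin a0 /\
  (forall th, 0 <= th <= PI/2 -> INR q * cos th * cos th - INR p * sin th * sin th = 0 -> th = a0).
Proof.
  intro a0. pose proof (lt_0_INR _ hp) as Hp. pose proof (lt_0_INR _ hq) as Hq.
  assert (Ht : 0 < sqrt (INR q / INR p)) by (apply sqrt_lt_R0; apply Rdiv_lt_0_compat; lra).
  pose proof (sqrt_sqrt (INR q / INR p) ltac:(apply Rlt_le, Rdiv_lt_0_compat; lra)) as St.
  set (t := sqrt _) in *.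
  pose proof (atan_bound t) as Hb. fold a0 in Hb.
  assert (Hc : 0 < cos a0) by (apply cos_gt_0; lra).
  assert (Htan : tan a0 = t) by apply tan_atan.
  assert (Hs' : sin a0 = t * cos a0) by (rewrite <- Htan; unfold tan; field; lra).
  assert (Hs : 0 < sin a0) by (rewrite Hs'; nra).
  assert (Ha : 0 < a0).
  { destruct (Rlt_or_le 0 a0) as [H|H]; auto. exfalso.
    destruct (Req_dec a0 0) as [E|E]. rewrite E, sin_0 in Hs; lra.
    assert (0 < sin (- a0)) by (apply sin_gt_0; lra). rewrite sin_neg in H0. lra. }
  split; [lra|]. split; [lra|]. split; [lra|]. split.
  - rewrite Hs'. replace (INR p * (t * cos a0) * (t * cos a0)) with (INR p * (t*t) * cos a0 * cos a0) by ring.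
    rewrite St. field. lra.
  - intros th Hth E.
    assert (Hc2 : th < PI/2).
    { destruct (Rlt_or_le th (PI/2)); auto. assert (th = PI/2) by lra. subst th.
      rewrite cos_PI2, sin_PI2 in E. lra. }
    assert (Hct : 0 < cos th) by (apply cos_gt_0; lra).
    assert (Hth0 : 0 < th).
    { destruct (Rlt_or_le 0 th); auto. assert (th = 0) by lra. subst th.
      rewrite cos_0, sin_0 in E. lra. }
    assert (Hst : 0 < sin th) by (apply sin_gt_0; lra).
    assert (Htt : 0 < tan th) by (unfold tan; apply Rdiv_lt_0_compat; lra).
    assert (E2 : tan th * tan th = INR q / INR p).
    { unfold tan. replace (sin th / cos th * (sin th / cos th)) with ((INR p * sin th * sin th) / (INR p * (cos th * cos th))) by (field; lra).
      replace (INR p * sin th * sin th) with (INR q * cos th * cos th) by lra. field. lra. }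
    assert (E3 : tan th = t).
    { unfold t. rewrite <- E2. rewrite sqrt_square; lra. }
    unfold a0. rewrite <- E3. rewrite atan_tan; lra.
Qed.

Lemma stat_per p q th al k : stationary p q th (al + 2 * IZR k * PI) -> stationary p q th al.
Proof.
  unfold stationary, Fth, Fal.
  replace (al + 2 * IZR k * PI - th) with ((al - th) + 2 * IZR k * PI) by ring.
  rewrite !sin_per, !cos_per. auto.
Qed.

Lemma even_odd_Z (k : Z) : exists j, k = (2*j)%Z \/ k = (2*j+1)%Z.
Proof. exists (Z.div2 k). destruct (Z.even k) eqn:E; [left|right].
  - rewrite (Z.div2_odd k) at 1. rewrite <- Z.negb_even, E. simpl. lia.
  - rewrite (Z.div2_odd k) at 1. rewrite <- Z.negb_even, E. simpl. lia.
Qed.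

Theorem lemma4p4 (p q : nat) (hp : (0 < p)%nat) (hq : (0 < q)%nat) :
  let a0 := atan (sqrt (INR q / INR p)) in
  (forall th al, listed_point a0 th al -> inR th al) /\
  (forall th al, inR th al ->
     (stationary p q th al <->
      exists k : Z, listed_point a0 th (al + 2 * IZR k * PI))) /\
  ((p + q <= 17)%nat -> lin spiral_sink p q a0 a0) /\
  ((18 <= p + q)%nat -> lin nodal_sink p q a0 a0) /\
  ((p + q <= 17)%nat -> lin spiral_source p q a0 (a0 + PI)) /\
  ((18 <= p + q)%nat -> lin nodal_source p q a0 (a0 + PI)) /\
  lin saddle p q 0 (PI / 2) /\ lin saddle p q 0 (3 * PI / 2) /\
  lin saddle p q (PI / 2) 0 /\ lin saddle p q (PI / 2) PI.
Proof.
  intro a0. destruct (a0_facts p q hp hq) as (Ha & Hc & Hs & Heq & Huniq). fold a0 in Ha, Hc, Hs, Heq, Huniq.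
  pose proof (lt_0_INR _ hp) as Hp. pose proof (lt_0_INR _ hq) as Hq.
  pose proof PI_RGT_0 as HPI.
  assert (H3 : 3 * PI / 2 = 3 * (PI / 2)) by field.
  split.
  { intros th al H. unfold listed_point, inR, inR1, inR2 in *.
    destruct H as [[-> ->]|[[-> ->]|[[-> ->]|[[-> ->]|[[-> ->]|[-> ->]]]]]];
      [left|right|left|right|left|left]; lra. }
  split.
  { intros th al HR. destruct HR as [[Hth Hal]|[Hth Hal]];
    assert (Hal' : th - PI/2 <= al <= th + 3*PI/2) by lra; clear Hal; split.
    all: try (intros [k Hk]; apply (stat_per _ _ _ _ k);
      unfold listed_point in Hk; set (b := al + 2 * IZR k * PI) in *; clearbody b;
      unfold stationary, Fth, Fal;
      destruct Hk as [[-> ->]|[[-> ->]|[[-> ->]|[[-> ->]|[[-> ->]|[-> ->]]]]]];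
      [ replace (a0 - a0) with 0 by ring; rewrite sin_0; split; lra
      | replace (a0 + PI - a0) with PI by ring; rewrite sin_PI, neg_cos, neg_sin; split; lra
      | rewrite sin_0, cos_PI2; split; ring
      | rewrite sin_0, H3, cos_3PI2; split; ring
      | rewrite cos_PI2, sin_0; split; ring
      | rewrite cos_PI2, sin_PI; split; ring ]).
    all: intros [E1 E2]; unfold Fth, Fal in E1, E2.
    all: assert (E1' : sin th = 0 \/ cos th = 0 \/ sin (al - th) = 0) by
      (destruct (Rmult_integral _ _ E1) as [E|E]; [destruct (Rmult_integral _ _ E) as [E'|E'];
        [destruct (Rmult_integral _ _ E') as [E''|E'']; [lra|auto]|auto]|auto]).
    all: destruct E1' as [S|[C|S]].
    all: try (assert (th = 0) by (destruct (Rlt_or_le 0 th); [assert (0 < sin th) by (apply sin_gt_0; lra); lra | lra]);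
      subst th; rewrite cos_0, sin_0 in E2;
      assert (Ca : cos al = 0) by (apply Rmult_eq_reg_l with (INR q); lra);
      destruct (cos_eq_0_0 _ Ca) as [k Hk]; destruct (even_odd_Z k) as [j [Hj|Hj]]; subst k;
      exists (- j)%Z; unfold listed_point;
      [ do 2 right; left | do 3 right; left ]; split; auto;
      rewrite Hk, ?plus_IZR, ?mult_IZR, ?opp_IZR; simpl; lra).
    all: try (assert (th = PI/2) by (destruct (Rlt_or_le th (PI/2)); [assert (0 < cos th) by (apply cos_gt_0; lra); lra | lra]);
      subst th; rewrite cos_PI2, sin_PI2 in E2;
      assert (Sa : sin al = 0) by (apply Rmult_eq_reg_l with (INR p); lra);
      destruct (sin_eq_0_0 _ Sa) as [k Hk]; destruct (even_odd_Z k) as [j [Hj|Hj]]; subst k;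
      exists (- j)%Z; unfold listed_point;
      [ do 4 right; left | do 5 right ]; split; auto;
      rewrite Hk, ?plus_IZR, ?mult_IZR, ?opp_IZR; simpl; lra).
    all: destruct (sin_eq_0_0 _ S) as [k Hk];
      assert (-1 < IZR k) by nra; assert (IZR k < 2) by nra;
      apply lt_IZR in H; apply lt_IZR in H0;
      assert (k = 0 \/ k = 1)%Z as [-> | ->] by lia; simpl in Hk.
    all: try (assert (al = th) by lra; subst al;
      assert (th = a0) by (apply Huniq; lra); subst th;
      exists 0%Z; left; split; simpl; lra).
    all: assert (al = th + PI) by lra; subst al; rewrite neg_cos, neg_sin in E2;
      assert (th = a0) by (apply Huniq; lra); subst th;
      exists 0%Z; right; left; split; simpl; lra. }
  assert (Hp1 : 1 <= INR p) by (apply (le_INR 1); lia).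
  assert (Hq1 : 1 <= INR q) by (apply (le_INR 1); lia).
  set (m := sin a0 * cos a0).
  assert (Hm : 0 < m) by (unfold m; nra).
  assert (P0 : jac_a a0 a0 = -3*m /\ jac_b a0 a0 = 3*m /\ jac_c p q a0 a0 = -(INR p + INR q)*m
      /\ jac_d p q a0 a0 = -(INR p + INR q)*m).
  { rewrite ja, jb, jc, jd. replace (a0 - a0) with 0 by ring. rewrite sin_0, cos_0. unfold m.
    repeat split; ring. }
  assert (P1 : jac_a a0 (a0+PI) = 3*m /\ jac_b a0 (a0+PI) = -3*m /\ jac_c p q a0 (a0+PI) = (INR p + INR q)*m
      /\ jac_d p q a0 (a0+PI) = (INR p + INR q)*m).
  { rewrite ja, jb, jc, jd. replace (a0 + PI - a0) with PI by ring. rewrite sin_PI, cos_PI, neg_cos, neg_sin. unfold m.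
    repeat split; ring. }
  destruct P0 as (A0 & B0 & C0 & D0). destruct P1 as (A1 & B1 & C1 & D1).
  unfold lin. rewrite A0, B0, C0, D0, A1, B1, C1, D1.
  assert (Hmm : 0 < m * m) by nra.
  split; [|split; [|split; [|split]]].
  - intro Hle. apply le_INR in Hle. rewrite plus_INR in Hle; try replace (INR 17) with 17 in Hle by (simpl; ring); try replace (INR 18) with 18 in Hle by (simpl; ring). apply ssink. nra.
    assert (HN2 : 2 <= INR p + INR q) by lra. set (N := INR p + INR q) in *. clearbody N.
    replace ((-3 * m + - N * m) * (-3 * m + - N * m) - 4 * (-3 * m * (- N * m) - 3 * m * (- N * m)))
      with ((m*m) * ((N-1)*(N-17) - 8)) by ring.
    assert (0 <= N-1) by lra. assert (N - 17 <= 0) by lra. assert ((N-1)*(N-17) <= 0) by (apply Rmult_le_0_l; lra). assert (0 < m*m*(8 - (N-1)*(N-17))) by (apply Rmult_lt_0_compat; lra). lra.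
  - intro Hle. apply le_INR in Hle. rewrite plus_INR in Hle; try replace (INR 17) with 17 in Hle by (simpl; ring); try replace (INR 18) with 18 in Hle by (simpl; ring). apply nsink. nra.
    assert (HN2 : 2 <= INR p + INR q) by lra. set (N := INR p + INR q) in *. clearbody N. nra.
    assert (HN2 : 2 <= INR p + INR q) by lra. set (N := INR p + INR q) in *. clearbody N. simpl in Hle.
    replace ((-3 * m + - N * m) * (-3 * m + - N * m) - 4 * (-3 * m * (- N * m) - 3 * m * (- N * m)))
      with ((m*m) * ((N-1)*(N-17) - 8)) by ring.
    assert (0 < N-1) by lra. assert (1 <= N - 17) by lra. assert (N - 1 <= (N-1)*(N-17)) by (rewrite <- (Rmult_1_r (N-1)) at 1; apply Rmult_le_compat_l; lra). apply Rmult_lt_0_compat; lra.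
  - intro Hle. apply le_INR in Hle. rewrite plus_INR in Hle; try replace (INR 17) with 17 in Hle by (simpl; ring); try replace (INR 18) with 18 in Hle by (simpl; ring). apply ssource. nra.
    assert (HN2 : 2 <= INR p + INR q) by lra. set (N := INR p + INR q) in *. clearbody N.
    replace ((3 * m + N * m) * (3 * m + N * m) - 4 * (3 * m * (N * m) - -3 * m * (N * m)))
      with ((m*m) * ((N-1)*(N-17) - 8)) by ring.
    assert (0 <= N-1) by lra. assert (N - 17 <= 0) by lra. assert ((N-1)*(N-17) <= 0) by (apply Rmult_le_0_l; lra). assert (0 < m*m*(8 - (N-1)*(N-17))) by (apply Rmult_lt_0_compat; lra). lra.
  - intro Hle. apply le_INR in Hle. rewrite plus_INR in Hle; try replace (INR 17) with 17 in Hle by (simpl; ring); try replace (INR 18) with 18 in Hle by (simpl; ring). apply nsource. nra.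
    assert (HN2 : 2 <= INR p + INR q) by lra. set (N := INR p + INR q) in *. clearbody N. nra.
    assert (HN2 : 2 <= INR p + INR q) by lra. set (N := INR p + INR q) in *. clearbody N. simpl in Hle.
    replace ((3 * m + N * m) * (3 * m + N * m) - 4 * (3 * m * (N * m) - -3 * m * (N * m)))
      with ((m*m) * ((N-1)*(N-17) - 8)) by ring.
    assert (0 < N-1) by lra. assert (1 <= N - 17) by lra. assert (N - 1 <= (N-1)*(N-17)) by (rewrite <- (Rmult_1_r (N-1)) at 1; apply Rmult_le_compat_l; lra). apply Rmult_lt_0_compat; lra.
  - rewrite ?ja, ?jb, ?jc, ?jd. repeat split.
    + apply saddle_tri'.
      * rewrite Rminus_0_r, sin_0. ring.
      * rewrite Rminus_0_r, sin_0, cos_0, sin_PI2, cos_PI2. lra.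
    + apply saddle_tri'.
      * rewrite Rminus_0_r, sin_0. ring.
      * rewrite Rminus_0_r, sin_0, cos_0, H3, sin_3PI2, cos_3PI2. lra.
    + apply saddle_tri'.
      * rewrite sin_PI2, cos_PI2. ring.
      * replace (0 - PI/2) with (- (PI/2)) by ring.
        rewrite sin_neg, cos_neg, sin_0, cos_0, sin_PI2, cos_PI2. lra.
    + apply saddle_tri'.
      * rewrite sin_PI2, cos_PI2. ring.
      * replace (PI - PI/2) with (PI/2) by field.
        rewrite sin_PI, cos_PI, sin_PI2, cos_PI2. lra.
Qed.
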